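(* Let $F$ be a finite field with $q$ elements and $G$ a finite abelian group of order $m$. Let $r\in(0,1)$ and $\delta\in(0,1-q^{-1})$, and for each $n$ put $k=[rn]$ (the integer nearest to $rn$). Let $A$ be uniformly random in $(FG)^{k\times n}$, let $C_A=\{\mathbf{b}A\mid \mathbf{b}\in(FG)^k\}$ and let $\Delta(C_A)$ be its relative distance. If $r<g_q(\delta)$, then $\lim_{n\to\infty}\Pr\big(\Delta(C_A)>\delta\big)=1$, and the convergence is exponential.
   Context: Each element $\sum_{z\in G}a_z z$ of the group algebra $FG$ is identified with the word $(a_z)_{z\in G}\in F^m$, and elements of $(FG)^n$ with concatenated words of length $mn$; Hamming weight is $\mathrm{w}$. For $\mathbf{b}=(b_1,\dots,b_k)$, $\mathbf{b}A=(\sum_i b_ia_{i1},\dots,\sum_i b_ia_{in})$. $\Delta(C_A)=\mathrm{w}(C_A)/(mn)$ with $\mathrm{w}(C_A)$ the minimum weight of nonzero codewords of $C_A$. $h_q(x)=x\log_q(q-1)-x\log_q x-(1-x)\log_q(1-x)$ (with $0\log_q0=0$) and $g_q(x)=1-h_q(x)$. *)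

(* Defs.v *)
From HB Require Import structures.
From mathcomp Require Import all_boot all_order all_algebra all_fingroup all_field.
From mathcomp Require Import all_classical all_reals all_analysis.
Set Implicit Arguments. Unset Strict Implicit. Unset Printing Implicit Defensive.
Import Order.TTheory GRing.Theory Num.Theory.
Local Open Scope ring_scope.

Section GroupAlgebraCodes.
Variables (F : finFieldType) (gT : finGroupType).

(* Elements of the group algebra FG, identified with words (a_z)_{z in G}. *)
Definition galg := {ffun gT -> F}.

(* Product in FG: (sum_u x_u u)(sum_v y_v v) = sum_z (sum_u x_u y_{u^-1 z}) z *)
Definition galg_mul (x y : galg) : galg :=
  [ffun z => \sum_(u : gT) x u * y (u^-1 * z)%g].

Definition codeword (k n : nat) (b : {ffun 'I_k -> galg})
  (A : {ffun 'I_k -> {ffun 'I_n -> galg}}) : {ffun 'I_n -> galg} :=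
  [ffun j => \sum_(i < k) galg_mul (b i) (A i j)].

(* Hamming weight of the concatenated word of length m n *)
Definition hweight (n : nat) (c : {ffun 'I_n -> galg}) : nat :=
  #|[set p : 'I_n * gT | c p.1 p.2 != 0]|.

Definition reldist_gt (R : realType) (k n : nat)
  (A : {ffun 'I_k -> {ffun 'I_n -> galg}}) (delta : R) : bool :=
  [forall b : {ffun 'I_k -> galg},
     (codeword b A != 0) ==>
     (delta < (hweight (codeword b A))%:R / (#|gT| * n)%:R)].

(* k = [r n], the integer nearest to r n (ties rounded up) *)
Definition kdim (R : realType) (r : R) (n : nat) : nat :=
  Num.truncn (r * n%:R + 2^-1).

Definition prob_good (R : realType) (r delta : R) (n : nat) : R :=
  (#|[set A : {ffun 'I_(kdim r n) -> {ffun 'I_n -> galg}} | reldist_gt A delta]|)%:R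
  / (#|{ffun 'I_(kdim r n) -> {ffun 'I_n -> galg}}|)%:R.

End GroupAlgebraCodes.

Definition logq (R : realType) (q : nat) (x : R) : R := ln x / ln q%:R.

(* q-ary entropy h_q and g_q = 1 - h_q (with 0 log 0 = 0) *)
Definition xlogq (R : realType) (q : nat) (x : R) : R :=
  if x == 0 then 0 else x * logq q x.
Definition hq (R : realType) (q : nat) (x : R) : R :=
  x * logq q (q.-1)%:R - xlogq q x - xlogq q (1 - x).
Definition gq (R : realType) (q : nat) (x : R) : R := 1 - hq q x.

(* Main.v *)
Require Import Defs.
From HB Require Import structures.
From mathcomp Require Import all_boot all_order all_algebra all_fingroup all_field.
From mathcomp Require Import all_classical all_reals all_analysis.
From mathcomp Require Import ring lra.
Import Order.TTheory GRing.Theory Num.Theory.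
Set Implicit Arguments. Unset Strict Implicit. Unset Printing Implicit Defensive.
Local Open Scope ring_scope.

Section Comb.
Variables (F : finFieldType) (gT : finGroupType).
Hypothesis abG : abelian [set: gT].
Local Notation galg := (galg F gT).

Lemma comm_all (x y : gT) : commute x y.
Proof. by apply: (centsP abG); rewrite inE. Qed.

Definition phi k (b a : {ffun 'I_k -> galg}) : galg :=
  \sum_(i < k) galg_mul (b i) (a i).

Lemma phiE k (b a : {ffun 'I_k -> galg}) z :
  phi b a z = \sum_(i < k) \sum_(u : gT) b i u * a i (u^-1 * z)%g.
Proof. by rewrite /phi sum_ffunE; apply: eq_bigr => i _; rewrite ffunE. Qed.

Definition lc k (a1 a2 : {ffun 'I_k -> galg}) (l : F) : {ffun 'I_k -> galg} :=
  [ffun i => [ffun g => a1 i g + l * a2 i g]].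

Lemma phi_lc k (b a1 a2 : {ffun 'I_k -> galg}) l z :
  phi b (lc a1 a2 l) z = phi b a1 z + l * phi b a2 z.
Proof.
rewrite !phiE mulr_sumr -big_split; apply: eq_bigr => i _.
rewrite mulr_sumr -big_split; apply: eq_bigr => u _.
by rewrite !ffunE mulrDr mulrCA.
Qed.

Lemma lc_inj k (c : {ffun 'I_k -> galg}) l : injective (fun a => lc a c l).
Proof.
move=> a a' /= /ffunP H; apply/ffunP => i; apply/ffunP => g.
by move: (H i) => /ffunP /(_ g); rewrite !ffunE => /addIr.
Qed.

Definition sh k (h : gT) (a : {ffun 'I_k -> galg}) : {ffun 'I_k -> galg} :=
  [ffun i => [ffun z => a i (h * z)%g]].

Lemma phi_sh k (b a : {ffun 'I_k -> galg}) h z :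
  phi b (sh h a) z = phi b a (h * z)%g.
Proof.
rewrite !phiE; apply: eq_bigr => i _; apply: eq_bigr => u _.
by rewrite !ffunE !mulgA (comm_all h u^-1).
Qed.

Lemma sh_inj k h : injective (@sh k h).
Proof.
move=> a a' /ffunP H; apply/ffunP => i; apply/ffunP => g.
by move: (H i) => /ffunP /(_ (h^-1 * g)%g); rewrite !ffunE mulKVg.
Qed.

Definition wt1 (c : galg) : nat := (\sum_(g : gT) (c g != 0%R))%N.
Definition wTh (T : {set gT}) (c : galg) (h : gT) : nat :=
  (\sum_(t in T) (c (h * t)%g != 0%R))%N.

Lemma sum_wTh T c : (\sum_(h : gT) wTh T c h = #|T| * wt1 c)%N.
Proof.
rewrite /wTh exchange_big /= -sum_nat_const; apply: eq_bigr => t _.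
by rewrite /wt1 [RHS](reindex_inj (mulIg t)).
Qed.

Definition restr (T : {set gT}) (c : galg) : galg :=
  [ffun g => if g \in T then c g else 0].

Lemma wTh1 T c : wTh T c 1%g = wt1 (restr T c).
Proof.
rewrite /wTh /wt1 big_mkcond /=; apply: eq_bigr => g _.
by rewrite ffunE mul1g; case: (g \in T); rewrite ?eqxx.
Qed.

Definition supp (T : {set gT}) : {set galg} :=
  [set x : galg | [forall g, (g \notin T) ==> (x g == 0)]].

Lemma restr_supp T c : restr T c \in supp T.
Proof.
rewrite inE; apply/forallP => g; rewrite ffunE; case: (g \in T) => //=.
Qed.

Lemma restr_id T x : x \in supp T -> restr T x = x.
Proof.
rewrite inE => /forallP H; apply/ffunP => g; rewrite ffunE.
by case: ifP => // gT'; move: (H g); rewrite gT' /= => /eqP ->.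
Qed.

Definition surjb k (b : {ffun 'I_k -> galg}) (T : {set gT}) : bool :=
  [forall x : galg, [exists a : {ffun 'I_k -> galg},
     restr T (phi b a) == restr T x]].


Variable R : realType.

Lemma sum_supp (T : {set gT}) (W : F -> R) : W 0 = 1 ->
  \sum_(x in supp T) \prod_(g in T) W (x g) = (\sum_y W y) ^+ #|T|.
Proof.
move=> W0.
pose V g y := if g \in T then W y else ((y == 0)%:R : R).
have -> : (\sum_y W y) ^+ #|T| = \prod_(g : gT) \sum_y V g y.
  rewrite -prodr_const [RHS](bigID (fun g => g \in T)) /=.
  rewrite [X in _ = _ * X]big1 ?mulr1; last first.
    move=> g /negbTE gT'; rewrite /V gT' (bigD1 0) //= eqxx big1 ?addr0 //.
    by move=> y /negbTE ->.
  by apply: eq_bigr => g gin; apply: eq_bigr => y _; rewrite /V gin.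
rewrite bigA_distr_bigA /= [LHS]big_mkcond /=.
apply: eq_bigr => x _.
case: ifP => xs.
- rewrite [RHS](bigID (fun g => g \in T)) /= [X in _ = _ * X]big1 ?mulr1.
    by apply: eq_bigr => g gin; rewrite /V gin.
  move=> g /negbTE gT'; rewrite /V gT'.
  move: xs; rewrite inE => /forallP /(_ g); rewrite gT' /= => /eqP ->.
  by rewrite eqxx.
- move: xs; rewrite inE => /negbT; rewrite negb_forall => /existsP [g].
  rewrite negb_imply => /andP [gT' xg].
  by rewrite (bigD1 g) //= /V (negbTE gT') (negbTE xg) mul0r.
Qed.

Lemma card_le_inj (T1 : finType) (A B : {set T1}) f : injective f ->
  (forall a, a \in A -> f a \in B) -> (#|A| <= #|B|)%N.
Proof.
move=> fi H; rewrite -(card_imset A fi); apply/subset_leq_card/fintype.subsetP.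
by move=> y /imsetP [a aA ->]; exact: H.
Qed.

Lemma restr_lc k (b a1 a2 : {ffun 'I_k -> galg}) T l g :
  restr T (phi b (lc a1 a2 l)) g = restr T (phi b a1) g + l * restr T (phi b a2) g.
Proof. by rewrite !ffunE phi_lc; case: (g \in T); rewrite ?mulr0 ?addr0. Qed.

Lemma fiber_card k (b : {ffun 'I_k -> galg}) T x :
  surjb b T -> x \in supp T ->
  #|[set a | restr T (phi b a) == x]| = #|[set a | restr T (phi b a) == 0]|.
Proof.
move=> /forallP /(_ x) /existsP [ax /eqP Hax] xs.
rewrite (restr_id xs) in Hax.
apply/eqP; rewrite eqn_leq; apply/andP; split.
- apply: (@card_le_inj _ _ _ (fun a => lc a ax (-1))); first exact: lc_inj.
  move=> a; rewrite !inE => /eqP Ha; apply/eqP/ffunP => g.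
  by rewrite restr_lc Ha Hax ffunE mulN1r subrr.
- apply: (@card_le_inj _ _ _ (fun a => lc a ax 1)); first exact: lc_inj.
  move=> a; rewrite !inE => /eqP Ha; apply/eqP/ffunP => g.
  by rewrite restr_lc Ha Hax ffunE mul1r add0r.
Qed.

Lemma fiber_sum k (b : {ffun 'I_k -> galg}) T (f0 : galg -> R) : surjb b T ->
  \sum_(a : {ffun 'I_k -> galg}) f0 (restr T (phi b a)) =
  #|[set a | restr T (phi b a) == 0]|%:R * \sum_(x in supp T) f0 x.
Proof.
move=> sb.
rewrite (partition_big (fun a => restr T (phi b a)) (mem (supp T))) /=; last first.
  by move=> a _; exact: restr_supp.
rewrite mulr_sumr; apply: eq_bigr => x xs.
rewrite (eq_bigr (fun=> f0 x)); last by move=> a /eqP ->.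
rewrite (eq_bigl (fun a => a \in [set a | restr T (phi b a) == x])); last first.
  by move=> a; rewrite inE.
by rewrite sumr_const (fiber_card sb xs) mulr_natl.
Qed.


Lemma card_gT_gt0 : (0 < #|gT|)%N.
Proof. by apply/card_gt0P; exists 1%g. Qed.

Lemma AMGM (y : gT -> R) : (forall h, 0 <= y h) ->
  \prod_h y h <= (\sum_h y h ^+ #|gT|) / #|gT|%:R.
Proof.
move=> y0.
have H := (@leif_AGM R gT predT (fun h => y h ^+ #|gT|) (fun h _ => exprn_ge0 _ (y0 h))).1.
have cT : #|@predT gT| = #|gT| by apply: eq_card => x.
rewrite cT prodrXl in H.
have e1 : \prod_(i in predT) y i = \prod_i y i by apply: eq_bigl.
have e2 : \sum_(i in predT) y i ^+ #|gT| = \sum_i y i ^+ #|gT| by apply: eq_bigl.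
rewrite e1 e2 in H.
move: H; rewrite ler_pXn2r ?card_gT_gt0 // nnegrE.
  by apply: prodr_ge0 => h _.
by apply: divr_ge0 => //; apply: sumr_ge0 => h _; apply: exprn_ge0.
Qed.


Lemma sum_constT (T1 : finType) (x : R) : \sum_(i : T1) x = x *+ #|T1|.
Proof. by rewrite -sumr_const; apply: eq_bigl. Qed.

Lemma sumW (l : R) : \sum_(y : F) expR (l * (y != 0)%:R) = 1 + (#|F|.-1)%:R * expR l.
Proof.
rewrite (bigD1 0) //= eqxx mulr0 expR0; congr (_ + _).
rewrite (eq_bigr (fun=> expR l)); last by move=> y /negbTE ->; rewrite mulr1.
rewrite (eq_bigl (fun y => y \in predC1 0)); last by move=> y; rewrite inE.
by rewrite sumr_const cardC1 mulr_natl.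
Qed.

Definition K0 k (b : {ffun 'I_k -> galg}) T := #|[set a | restr T (phi b a) == 0]|.

Lemma col_bound k (b : {ffun 'I_k -> galg}) T (beta : R) : surjb b T ->
  \sum_a expR (- beta * (#|T| * wt1 (phi b a))%:R) <=
  (K0 b T)%:R * (1 + (#|F|.-1)%:R * expR (- beta * #|gT|%:R)) ^+ #|T|.
Proof.
move=> sb.
pose G a h := expR (- beta * (wTh T (phi b a) h)%:R).
have step1 : forall a, expR (- beta * (#|T| * wt1 (phi b a))%:R)
    <= (\sum_h G a h ^+ #|gT|) / #|gT|%:R.
  move=> a; rewrite -sum_wTh natr_sum mulr_sumr expR_sum.
  by apply: AMGM => h; exact: expR_ge0.
apply: le_trans (ler_sum _ (fun a _ => step1 a)) _.
rewrite -mulr_suml exchange_big /=.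
pose X := \sum_a expR (- beta * #|gT|%:R * (wt1 (restr T (phi b a)))%:R).
have step2 : forall h, \sum_a G a h ^+ #|gT| = X.
  move=> h; rewrite /X [RHS](reindex_inj (@sh_inj k h)) /=; apply: eq_bigr => a _.
  rewrite /G -expRM_natr -wTh1; congr expR.
  rewrite mulrAC; congr (_ * _%:R); rewrite /wTh; apply: eq_bigr => t _.
  by rewrite phi_sh mul1g.
rewrite (eq_bigr (fun=> X)) // sum_constT -[X *+ _]mulr_natr mulfK; last first.
  by rewrite pnatr_eq0 -lt0n card_gT_gt0.
rewrite /X (fiber_sum (fun x => expR (- beta * #|gT|%:R * (wt1 x)%:R)) sb).
apply: ler_wpM2l; first exact: ler0n.
rewrite -sumW -(@sum_supp T (fun y => expR (- beta * #|gT|%:R * (y != 0)%:R))); last first.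
  by rewrite eqxx mulr0 expR0.
rewrite le_eqVlt; apply/orP; left; apply/eqP; apply: eq_bigr => x xs.
rewrite -expR_sum -{1}(restr_id xs) -wTh1 /wTh natr_sum mulr_sumr.
by congr expR; apply: eq_bigr => t _; rewrite mul1g.
Qed.


Lemma zero_galg (g : gT) : (0 : galg) g = 0.
Proof. by rewrite ffunE. Qed.

Lemma zero_ffk k (i : 'I_k) : (0 : {ffun 'I_k -> galg}) i = 0.
Proof. by rewrite ffunE. Qed.

Lemma card_supp (T : {set gT}) : #|supp T| = (#|F| ^ #|T|)%N.
Proof.
apply/eqP; rewrite -(eqr_nat R) natrX; apply/eqP.
have H := @sum_supp T (fun=> (1:R)) erefl.
have e : \sum_(x in supp T) \prod_(g in T) (fun=> (1:R)) (x g) = \sum_(x in supp T) (1:R).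
  by apply: eq_bigr => x _; apply: big1.
by rewrite e sumr_const sum_constT in H; rewrite H.
Qed.

Lemma card_dom k (b : {ffun 'I_k -> galg}) T : surjb b T ->
  (#|{ffun 'I_k -> galg}|%:R : R) = (K0 b T)%:R * (#|F|%:R) ^+ #|T|.
Proof.
move=> sb; have := fiber_sum (fun=> (1 : R)) sb.
by rewrite sum_constT sumr_const card_supp natrX => ->.
Qed.

Definition dimb k (b : {ffun 'I_k -> galg}) : nat :=
  \max_(T in [set T : {set gT} | surjb b T]) #|T|.

Lemma surjb0 k (b : {ffun 'I_k -> galg}) : surjb b finset.set0.
Proof.
apply/forallP => x; apply/existsP; exists 0; apply/eqP/ffunP => g.
by rewrite !ffunE inE.
Qed.

Lemma dimb_spec k (b : {ffun 'I_k -> galg}) : {T | surjb b T & #|T| = dimb b}.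
Proof.
have [|T] := @eq_bigmax_cond _ (mem [set T : {set gT} | surjb b T]) (fun T => #|T|).
  by apply/card_gt0P; exists finset.set0; rewrite inE surjb0.
by rewrite inE => sT e; exists T => //; rewrite /dimb e.
Qed.

Lemma surj_le_dimb k (b : {ffun 'I_k -> galg}) T : surjb b T -> (#|T| <= dimb b)%N.
Proof. by move=> sT; rewrite /dimb (bigD1 T) ?inE //= leq_maxl. Qed.

Lemma dimb_le k (b : {ffun 'I_k -> galg}) : (dimb b <= #|gT|)%N.
Proof. by apply/bigmax_leqP => T _; exact: max_card. Qed.

Definition ea k (i : 'I_k) (l : F) : {ffun 'I_k -> galg} :=
  [ffun j => if j == i then [ffun z => if z == 1%g then l else 0] else 0].

Lemma phi_ea k (b : {ffun 'I_k -> galg}) i l z : phi b (ea i l) z = b i z * l.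
Proof.
rewrite phiE (bigD1 i) //= [X in _ + X]big1 ?addr0; last first.
  move=> j /negbTE ji; apply: big1 => u _; by rewrite ffunE ji zero_galg mulr0.
rewrite (bigD1 z) //= [X in _ + X]big1 ?addr0; last first.
  move=> u uz; rewrite !ffunE eqxx ffunE -eq_mulVg1 (negbTE uz) mulr0 //.
by rewrite !ffunE eqxx ffunE mulVg eqxx.
Qed.

Lemma dimb_ge1 k (b : {ffun 'I_k -> galg}) : b != 0 -> (1 <= dimb b)%N.
Proof.
move=> bn0.
have [i bi] : exists i, b i != 0.
  apply/existsP; move: bn0; apply: contraR; rewrite negb_exists => /forallP H.
  by apply/eqP/ffunP => i; move: (H i) => /negbNE /eqP ->; rewrite zero_ffk.
have [g0 big0] : exists g0, b i g0 != 0.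
  apply/existsP; move: bi; apply: contraR; rewrite negb_exists => /forallP H.
  by apply/eqP/ffunP => g; move: (H g) => /negbNE /eqP ->; rewrite zero_galg.
have : surjb b [set g0].
  apply/forallP => x; apply/existsP; exists (ea i (x g0 / b i g0)).
  apply/eqP/ffunP => g; rewrite !ffunE inE.
  case: eqP => // ->; by rewrite phi_ea mulrC divfK.
by move/surj_le_dimb; rewrite cards1.
Qed.

Lemma b_in_img k (b : {ffun 'I_k -> galg}) i : b i \in (phi b) @: [set: {ffun 'I_k -> galg}].
Proof.
apply/imsetP; exists (ea i 1); first by rewrite inE.
by apply/ffunP => g; rewrite phi_ea mulr1.
Qed.


Lemma img_card k (b : {ffun 'I_k -> galg}) :
  (#|(phi b) @: [set: {ffun 'I_k -> galg}]| <= #|F| ^ dimb b)%N.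
Proof.
have [T sb dT] := dimb_spec b.
rewrite -dT -card_supp -(@card_in_imset _ _ (restr T)).
  by apply/subset_leq_card/fintype.subsetP => y /imsetP [c _ ->]; exact: restr_supp.
move=> c1 c2 /imsetP [a1 _ ->] /imsetP [a2 _ ->] /ffunP Hr.
apply/ffunP => g; case: (eqVneq (phi b a1 g) (phi b a2 g)) => // hne.
exfalso.
have gnT : g \notin T.
  apply/negP => gin; move: (Hr g); rewrite !ffunE gin => E; by rewrite E eqxx in hne.
have : surjb b (g |: T).
  apply/forallP => x; move/forallP: sb => /(_ x) /existsP [a' /eqP Ha'].
  set c := lc a1 a2 (-1).
  have pc : forall z, phi b c z = phi b a1 z - phi b a2 z.
    by move=> z; rewrite phi_lc mulN1r.
  have pcg : phi b c g != 0 by rewrite pc subr_eq0.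
  apply/existsP; exists (lc a' c ((x g - phi b a' g) / phi b c g)).
  apply/eqP/ffunP => z; rewrite !ffunE in_setU1.
  case: eqP => [-> | _] /=.
    by rewrite phi_lc divfK // addrC subrK.
  case zT: (z \in T) => //.
  move: (Hr z) (Ha') => /eqP; rewrite !ffunE zT => /eqP e1 /ffunP /(_ z).
  rewrite !ffunE zT => e2; by rewrite phi_lc (pc z) e1 subrr mulr0 addr0.
move=> /(@surj_le_dimb k b (g |: T)); rewrite cardsU1 gnT -dT /=.
by rewrite ltnn.
Qed.

Lemma leq_expn a c e : (a <= c)%N -> (a ^ e <= c ^ e)%N.
Proof. by move=> ac; elim: e => // e IH; rewrite !expnS leq_mul. Qed.

Lemma sum_nat_constT (T1 : finType) (n : nat) : (\sum_(i : T1) n = #|T1| * n)%N.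
Proof. by rewrite -sum_nat_const; apply: eq_bigl. Qed.

Lemma count_dim k d :
  (#|[set b : {ffun 'I_k -> galg} | dimb b == d]| <= #|{set galg}| * (#|F| ^ d) ^ k)%N.
Proof.
pose small (S : {set galg}) := (#|S| <= #|F| ^ d)%N.
pose inS (S : {set galg}) (b : {ffun 'I_k -> galg}) := [forall i, b i \in S].
apply: (@leq_trans (\sum_(S | small S) #|[set b | inS S b]|)).
  rewrite -sum1_card.
  apply: (@leq_trans (\sum_b \sum_(S | small S) (inS S b : nat))).
    rewrite [X in (X <= _)%N]big_mkcond /=; apply: leq_sum => b _.
    rewrite inE; case: eqP => // db.
    rewrite (bigD1 ((phi b) @: [set: {ffun 'I_k -> galg}])) /=.
      have -> : inS ((phi b) @: [set: {ffun 'I_k -> galg}]) b.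
        by apply/forallP => i; exact: b_in_img.
      by rewrite leq_addr.
    by rewrite /small -db img_card.
  rewrite exchange_big /=; apply: leq_sum => S _.
  by rewrite -sum1_card [X in (_ <= X)%N]big_mkcond /=; apply: leq_sum => b _; rewrite inE; case: (inS S b).
apply: (@leq_trans (\sum_(S : {set galg}) (#|F| ^ d) ^ k)%N).
  rewrite [X in (X <= _)%N]big_mkcond /=; apply: leq_sum => S _.
  case sS: (small S) => //.
  have -> : #|[set b | inS S b]| = #|@ffun_on_mem 'I_k galg (mem S)|.
    by apply: eq_card => b; rewrite inE; apply/forallP/ffun_onP.
  by rewrite card_ffun_on card_ord leq_expn.
by rewrite sum_nat_constT.
Qed.


Lemma ler_expn (x y : R) n : 0 <= x -> x <= y -> x ^+ n <= y ^+ n.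
Proof.
move=> x0 xy; elim: n => [|n IH]; first by rewrite !expr0.
rewrite !exprS; apply: ler_pM => //; exact: exprn_ge0.
Qed.

Definition col k n (A : {ffun 'I_k -> {ffun 'I_n -> galg}}) (j : 'I_n) :
  {ffun 'I_k -> galg} := [ffun i => A i j].

Lemma codeword_col k n (b : {ffun 'I_k -> galg}) A j :
  codeword b A j = phi b (@col k n A j).
Proof. by rewrite ffunE /phi; apply: eq_bigr => i _; rewrite ffunE. Qed.

Lemma hweight_sum n (c : {ffun 'I_n -> galg}) : hweight c = (\sum_j wt1 (c j))%N.
Proof.
rewrite /hweight /wt1 pair_big /= -sum1_card big_mkcond /=.
by apply: eq_bigr => p _; rewrite inE; case: (_ != _).
Qed.

Lemma sumA_prod k n (f : {ffun 'I_k -> galg} -> R) :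
  \sum_(A : {ffun 'I_k -> {ffun 'I_n -> galg}}) \prod_(j < n) f (col A j) =
  (\sum_a f a) ^+ n.
Proof.
rewrite -[n in RHS]card_ord -prodr_const bigA_distr_bigA /=.
pose h (G : {ffun 'I_n -> {ffun 'I_k -> galg}}) : {ffun 'I_k -> {ffun 'I_n -> galg}} :=
  [ffun i => [ffun j => G j i]].
rewrite (reindex h) /=; last first.
  exists (fun A => [ffun j => col A j]) => G _.
    by apply/ffunP => j; apply/ffunP => i; rewrite !ffunE.
  by apply/ffunP => i; apply/ffunP => j; rewrite !ffunE.
apply: eq_bigr => G _; apply: eq_bigr => j _; congr f.
by apply/ffunP => i; rewrite !ffunE.
Qed.

Definition Ev k n (b : {ffun 'I_k -> galg}) (A : {ffun 'I_k -> {ffun 'I_n -> galg}})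
  (delta : R) : bool :=
  (codeword b A != 0) &&
  ~~ (delta < (hweight (codeword b A))%:R / (#|gT| * n)%:R).

Lemma Ev_wt k n b A delta : 0 <= delta -> @Ev k n b A delta ->
  (hweight (codeword b A))%:R <= delta * (#|gT| * n)%:R.
Proof.
move=> d0 /andP [_ H].
case: n A H => [|n] A H.
  by rewrite hweight_sum big_ord0 muln0 mulr0.
have N0 : (0 : R) < (#|gT| * n.+1)%:R by rewrite ltr0n muln_gt0 card_gT_gt0.
by rewrite -ler_pdivrMr // leNgt.
Qed.

Lemma Ev_bound k n (b : {ffun 'I_k -> galg}) T (beta delta : R) :
  surjb b T -> 0 <= beta -> 0 <= delta ->
  \sum_A (@Ev k n b A delta)%:R <=
  expR (beta * #|T|%:R * (delta * (#|gT| * n)%:R)) *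
  ((K0 b T)%:R * (1 + (#|F|.-1)%:R * expR (- beta * #|gT|%:R)) ^+ #|T|) ^+ n.
Proof.
move=> sb b0 d0.
apply: (@le_trans _ _ (\sum_A expR (beta * #|T|%:R *
    (delta * (#|gT| * n)%:R - (hweight (codeword b A))%:R)))).
  apply: ler_sum => A _; case E: (Ev b A delta); last exact: expR_ge0.
  apply: le_trans (expR_ge1Dx _); rewrite lerDl.
  apply: mulr_ge0; first by apply: mulr_ge0.
  by rewrite subr_ge0; apply: Ev_wt.
rewrite (eq_bigr (fun A => expR (beta * #|T|%:R * (delta * (#|gT| * n)%:R)) *
   \prod_(j < n) expR (- beta * (#|T| * wt1 (phi b (col A j)))%:R))); last first.
  move=> A _; rewrite -expR_sum -expRD; congr expR.
  rewrite hweight_sum mulrBr; congr (_ + _).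
  rewrite natr_sum mulr_sumr -sumrN; apply: eq_bigr => j _.
  by rewrite codeword_col natrM mulNr mulrA.
rewrite -mulr_sumr (@sumA_prod k n (fun a => expR (- beta * (#|T| * wt1 (phi b a))%:R))).
apply: ler_wpM2l; first exact: expR_ge0.
apply: ler_expn; [by apply: sumr_ge0 => a _; exact: expR_ge0 | exact: col_bound].
Qed.


Definition rho (beta delta : R) : R :=
  expR (beta * delta * #|gT|%:R) * (1 + (#|F|.-1)%:R * expR (- beta * #|gT|%:R)) / #|F|%:R.

Lemma rho_ge0 beta delta : 0 <= rho beta delta.
Proof.
rewrite /rho; apply: divr_ge0; last exact: ler0n.
apply: mulr_ge0; first exact: expR_ge0.
by apply: addr_ge0.
Qed.

Lemma card_F_gt0 : (0 < #|F|)%N.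
Proof. by apply/card_gt0P; exists 0. Qed.

Lemma cardA k n : (#|{ffun 'I_k -> {ffun 'I_n -> galg}}|%:R : R) =
  (#|{ffun 'I_k -> galg}|%:R) ^+ n.
Proof. by rewrite -natrX !card_ffun !card_ord expnAC. Qed.

Lemma Ev_bound2 k n (b : {ffun 'I_k -> galg}) T (beta delta : R) :
  surjb b T -> 0 <= beta -> 0 <= delta ->
  \sum_A (@Ev k n b A delta)%:R <=
  #|{ffun 'I_k -> {ffun 'I_n -> galg}}|%:R * rho beta delta ^+ (#|T| * n).
Proof.
move=> sb b0 d0; apply: le_trans (Ev_bound n sb b0 d0) _.
rewrite cardA (card_dom sb) /rho le_eqVlt; apply/orP; left; apply/eqP.
have qn0 : (#|F|%:R : R) != 0 by rewrite pnatr_eq0 -lt0n card_F_gt0.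
set K := (K0 b T)%:R; set X := (1 + _ * _); set q := (#|F|%:R : R).
have -> : beta * #|T|%:R * (delta * (#|gT| * n)%:R) = beta * delta * #|gT|%:R * (#|T| * n)%:R.
  by rewrite !natrM; ring.
rewrite expRM_natr.
rewrite !exprMn -!exprM exprVn.
field.
by rewrite expf_neq0.
Qed.

Lemma codeword0 k n (A : {ffun 'I_k -> {ffun 'I_n -> galg}}) : codeword 0 A = 0.
Proof.
apply/ffunP => j; rewrite !ffunE; apply: big1 => i _.
apply/ffunP => z; rewrite !ffunE; apply: big1 => u _.
by rewrite zero_galg mul0r.
Qed.

Lemma union_bound k n (beta delta : R) : 0 <= beta -> 0 <= delta ->
  (#|[set A : {ffun 'I_k -> {ffun 'I_n -> galg}} | ~~ reldist_gt A delta]|%:R : R) <=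
  #|{ffun 'I_k -> {ffun 'I_n -> galg}}|%:R *
  \sum_(b : {ffun 'I_k -> galg}) (b != 0)%:R * rho beta delta ^+ (dimb b * n).
Proof.
move=> b0 d0.
apply: (@le_trans _ _ (\sum_A \sum_b (@Ev k n b A delta)%:R)).
  rewrite -sum1_card natr_sum big_mkcond /=; apply: ler_sum => A _.
  rewrite inE; case H: (~~ reldist_gt A delta); last first.
    by apply: sumr_ge0 => b' _; exact: ler0n.
  move: H; rewrite /reldist_gt negb_forall.
  move=> /existsP [b]; rewrite negb_imply => Eb.
  rewrite (bigD1 b) //= /Ev Eb /= lerDl.
  by apply: sumr_ge0 => b' _; exact: ler0n.
rewrite exchange_big mulr_sumr; apply: ler_sum => b _.
case: (eqVneq b 0) => [-> | bn0].
  rewrite big1 ?eqxx ?mul0r ?mulr0 // => A _.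
  by rewrite /Ev codeword0 eqxx.
have [T sb dT] := dimb_spec b.
by rewrite mul1r -dT; apply: Ev_bound2.
Qed.


Lemma dim_sum k (y : R) : 0 <= y ->
  \sum_(b : {ffun 'I_k -> galg}) (b != 0)%:R * y ^+ dimb b <=
  #|{set galg}|%:R * \sum_(d < #|gT|) (y * (#|F|%:R) ^+ k) ^+ d.+1.
Proof.
move=> y0.
apply: (@le_trans _ _ (\sum_b \sum_(d < #|gT|) (dimb b == d.+1)%:R * y ^+ d.+1)).
  apply: ler_sum => b _.
  case: (eqVneq b 0) => [_ | bn0].
    rewrite mul0r; apply: sumr_ge0 => d _; apply: mulr_ge0 => //; exact: exprn_ge0.
  have := dimb_ge1 bn0; have := dimb_le b.
  case E: (dimb b) => [|d'] // dl _.
  rewrite (bigD1 (Ordinal dl)) //= eqxx ?bn0 -[true%:R]/(1 : R) !mul1r lerDl.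
  by apply: sumr_ge0 => d _; apply: mulr_ge0 => //; exact: exprn_ge0.
rewrite exchange_big mulr_sumr; apply: ler_sum => d _.
rewrite -mulr_suml.
apply: (@le_trans _ _ (#|[set b : {ffun 'I_k -> galg} | dimb b == d.+1]|%:R * y ^+ d.+1)).
  rewrite ler_wpM2r ?exprn_ge0 // -sum1_card natr_sum [X in _ <= X]big_mkcond /=.
  by apply: ler_sum => b _; rewrite inE; case: (dimb b == d.+1).
apply: (@le_trans _ _ ((#|{set galg}| * (#|F| ^ d.+1) ^ k)%N%:R * y ^+ d.+1)).
  by rewrite ler_wpM2r ?exprn_ge0 // ler_nat count_dim.
rewrite natrM !natrX -exprM mulnC exprM exprMn.
by rewrite le_eqVlt; apply/orP; left; apply/eqP; ring.
Qed.

End Comb.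

Lemma card_F_gt1 (F : finFieldType) : (1 < #|F|)%N.
Proof. by apply/card_gt1P; exists 0, 1; split => //; rewrite eq_sym oner_neq0. Qed.

Lemma rho_value (R : realType) (F : finFieldType) (gT : finGroupType) (delta : R) :
  0 < delta < 1 - (#|F|%:R)^-1 ->
  0 <= (ln ((#|F|.-1)%:R * (1 - delta)) - ln delta) / #|gT|%:R /\
  rho F gT ((ln ((#|F|.-1)%:R * (1 - delta)) - ln delta) / #|gT|%:R) delta =
  expR (- (ln (#|F|%:R : R) * gq #|F| delta)).
Proof.
move=> /andP [d0 dq].
have q1 := card_F_gt1 F.
set qR := (#|F|%:R : R).
have qR1 : 1 < qR by rewrite /qR ltr1n.
have qR0 : 0 < qR by apply: lt_trans qR1.
have eQ1 : (#|F|.-1)%:R = qR - 1 :> R.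
  by rewrite -subn1 natrB ?(ltnW q1).
rewrite eQ1.
set Q1 := qR - 1.
have Q10 : 0 < Q1 by rewrite /Q1 subr_gt0.
have d1 : delta < 1.
  by apply: lt_le_trans dq _; rewrite lerBlDr lerDl invr_ge0 ltW.
have md0 : 0 < 1 - delta by rewrite subr_gt0.
have dqR : delta * qR < qR - 1.
  have := dq; rewrite -(ltr_pM2r qR0) mulrBl mulVf ?mul1r //.
  by rewrite gt_eqF.
have dle : delta <= Q1 * (1 - delta).
  rewrite /Q1; apply: ltW; nra.
have m0 : (0 : R) < #|gT|%:R by rewrite ltr0n card_gT_gt0.
set beta := (ln (Q1 * (1 - delta)) - ln delta) / #|gT|%:R.
have bm : beta * #|gT|%:R = ln Q1 + ln (1 - delta) - ln delta.
  by rewrite /beta divfK ?gt_eqF // lnM ?posrE.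
split.
  apply: divr_ge0; last exact: ltW.
  rewrite subr_ge0 ler_ln ?posrE //; apply: mulr_gt0 => //.
have eN : expR (- beta * #|gT|%:R) = delta / (Q1 * (1 - delta)).
  by rewrite mulNr bm opprB expRB expRD !lnK ?posrE.
rewrite /rho eN eQ1 -/Q1 -/qR.
have -> : 1 + Q1 * (delta / (Q1 * (1 - delta))) = expR (- ln (1 - delta)).
  rewrite expRN lnK ?posrE //; field.
  by apply/andP; split; rewrite gt_eqF.
have -> : expR (beta * delta * #|gT|%:R) = expR (delta * (ln Q1 + ln (1 - delta) - ln delta)).
  by rewrite -bm; congr expR; ring.
rewrite -expRD -[qR in _ / qR](lnK (x := qR)) ?posrE // -expRB.
congr expR.
rewrite /gq /hq /xlogq /logq (gt_eqF d0) (gt_eqF md0) -/qR eQ1 -/Q1.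
have L0 : ln qR != 0 by rewrite gt_eqF // ln_gt0.
by field.
Qed.

Lemma main_bound (R : realType) (F : finFieldType) (gT : finGroupType)
  (r delta : R) :
  abelian [set: gT] ->
  0 < r < 1 ->
  0 < delta < 1 - (#|F|%:R)^-1 ->
  r < gq #|F| delta ->
  exists c C : R, 0 < c /\
   forall n : nat, 0 <= 1 - prob_good F gT r delta n <= C * expR (- (c * n%:R)).
Proof.
move=> abG /andP [r0 r1] hd rg.
have [b0 rv] := rho_value gT hd.
set beta := (ln _ - _) / _ in b0 rv.
set L := ln (#|F|%:R : R).
have L0 : 0 < L by rewrite ln_gt0 // ltr1n card_F_gt1.
set g := gq #|F| delta in rv rg.
exists (L * (g - r)), (#|{set galg F gT}|%:R * #|gT|%:R * expR (#|gT|%:R * L / 2)).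
split; first by rewrite mulr_gt0 // subr_gt0.
move=> n.
set k := kdim r n.
have d0 : 0 <= delta by case/andP: hd => /ltW.
set N := #|{ffun 'I_k -> {ffun 'I_n -> galg F gT}}|.
have N0 : (0 : R) < N%:R by rewrite ltr0n; apply/card_gt0P; exists 0.
set G := #|[set A : {ffun 'I_k -> {ffun 'I_n -> galg F gT}} | reldist_gt A delta]|.
set B := #|[set A : {ffun 'I_k -> {ffun 'I_n -> galg F gT}} | ~~ reldist_gt A delta]|.
have GB : (G + B)%N = N.
  rewrite /G /B /N -(cardsC [set A : {ffun 'I_k -> {ffun 'I_n -> galg F gT}} | reldist_gt A delta]).
  by congr (_ + _)%N; apply: eq_card => A; rewrite !inE.
have pE : 1 - prob_good F gT r delta n = B%:R / N%:R.
  rewrite /prob_good -/k -/N -/G.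
  have e : (N%:R : R) = G%:R + B%:R by rewrite -natrD GB.
  move: N0; rewrite e => N0; field; by rewrite gt_eqF.
rewrite pE; apply/andP; split; first by apply: divr_ge0.
rewrite ler_pdivrMr //.
have ub := @union_bound F gT abG R k n beta delta b0 d0.
rewrite -/N -/B in ub.
set y := rho F gT beta delta ^+ n.
have y0 : 0 <= y by apply: exprn_ge0; apply: rho_ge0.
have ds := @dim_sum F gT R k y y0.
have e1 : \sum_(b : {ffun 'I_k -> galg F gT}) (b != 0)%:R * rho F gT beta delta ^+ (dimb b * n)
   = \sum_(b : {ffun 'I_k -> galg F gT}) (b != 0)%:R * y ^+ dimb b.
  by apply: eq_bigr => b _; rewrite mulnC exprM.
rewrite e1 in ub.
set P := (#|{set galg F gT}|%:R : R).
set q := (#|F|%:R : R).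
have qL : q = expR L by rewrite /L lnK // posrE ltr0n card_F_gt0.
have kb : (k%:R : R) <= r * n%:R + 2^-1.
  by rewrite /k /kdim truncn_le addr_ge0 // mulr_ge0 // ltW.
have zb : forall d : 'I_#|gT|, (y * q ^+ k) ^+ d.+1 <=
    expR (#|gT|%:R * L / 2 - L * (g - r) * n%:R).
  move=> d; rewrite /y rv -/L qL -!expRM_natl -expRD -expRM_natl ler_expR.
  have dm : (d.+1%:R : R) <= #|gT|%:R by rewrite ler_nat ltn_ord.
  have d1 : (1 : R) <= d.+1%:R by rewrite ler1n.
  have n0 : (0 : R) <= n%:R by [].
  have c0 : 0 <= L * (g - r) * n%:R.
    by apply: mulr_ge0 => //; apply: mulr_ge0; [exact: ltW | by rewrite subr_ge0 ltW].
  set X := n%:R * - (L * g) + k%:R * L.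
  set cn := L * (g - r) * n%:R.
  have kL : k%:R * L <= (r * n%:R + 2^-1) * L by rewrite ler_wpM2r // ltW.
  have hX : X <= L / 2 - cn by rewrite /X /cn; lra.
  have h1 : d.+1%:R * X <= d.+1%:R * (L / 2 - cn) by rewrite ler_wpM2l // (le_trans ler01 d1).
  have h2 : d.+1%:R * L <= #|gT|%:R * L by rewrite ler_wpM2r // ltW.
  have h3 : cn <= d.+1%:R * cn by rewrite ler_peMl.
  lra.
set E1 := expR (#|gT|%:R * L / 2).
set E2 := expR (- (L * (g - r) * n%:R)).
apply: (le_trans ub).
apply: (@le_trans _ _ (N%:R * (P * (#|gT|%:R * (E1 * E2))))); last first.
  by rewrite le_eqVlt; apply/orP; left; apply/eqP; ring.
apply: ler_wpM2l; first exact: ler0n.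
apply: (le_trans ds); apply: ler_wpM2l; first exact: ler0n.
apply: (@le_trans _ _ (\sum_(d < #|gT|) (E1 * E2))).
  by apply: ler_sum => d _; rewrite /E1 /E2 -expRD; exact: zb d.
by rewrite (@sum_constT R) card_ord mulr_natl.
Qed.

Unset Implicit Arguments.
Local Open Scope classical_set_scope.
Local Open Scope ring_scope.
Import numFieldNormedType.Exports.

Theorem corollary4p2 (R : realType) (F : finFieldType) (gT : finGroupType)
  (r delta : R) :
  abelian (finset.setT : {set gT}) ->
  0 < r < 1 ->
  0 < delta < 1 - (#|F|%:R)^-1 ->
  r < gq #|F| delta ->
  (prob_good F gT r delta n @[n --> \oo] --> (1 : R)) /\
  (exists c C : R, 0 < c /\
     forall n : nat, 1 - prob_good F gT r delta n <= C * expR (- (c * n%:R))).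
Proof.
move=> abG hr hd rg.
have [c [C [c0 H]]] := main_bound abG hr hd rg.
split; last by exists c, C; split => // n; case/andP: (H n).
have e0 : (fun n : nat => C * expR (- (c * n%:R))) @ \oo --> (0 : R).
  have g0 : (fun n : nat => expR (- c) ^+ n) @ \oo --> (0 : R).
    by apply: cvg_expr; rewrite ger0_norm ?expR_ge0 // expR_lt1 oppr_lt0.
  have := cvgMl_tmp (a := C) g0; rewrite mulr0.
  have -> : (fun n : nat => C * expR (- (c * n%:R))) = (fun n => C * expR (- c) ^+ n).
    by apply: funext => n; rewrite -expRM_natr mulNr.
  move=> h; apply: h.
have f1 : (fun n : nat => 1 - C * expR (- (c * n%:R))) @ \oo --> (1 : R).
  have := cvgB (cvg_cst (1 : R)) e0; rewrite subr0; exact.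
apply: (squeeze_cvgr _ f1 (cvg_cst (1 : R))).
apply: nearW => n; have /andP [h1 h2] := H n.
apply/andP; split.
  by rewrite lerBlDr addrC -lerBlDr.
by rewrite -subr_ge0.
Qed.
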